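(* Let $k\ge 4$ be an integer, let $m$ be an integer with $$m\ge \min\left\{\left\lceil \frac{(k+2)(k-3)}{2k}\right\rceil,\ \left\lceil \sqrt{2k+\tfrac14}-\tfrac32\right\rceil\right\}-1,$$ and let $D\ge m2^{k-1}$ be a positive integer divisible by $4$. Then there exists a binary self-orthogonal $[N,k,D]$ Griesmer code, where $N=\sum_{i=0}^{k-1}\lceil D/2^i\rceil$.
   Context: A binary code is self-orthogonal if $C\subseteq C^\perp$. A binary $[N,k,D]$ code is a Griesmer code if $N=\sum_{i=0}^{k-1}\lceil D/2^i\rceil$. *)

(* Defs.v *)
From HB Require Import structures.
From mathcomp Require Import all_boot all_order all_algebra.
From mathcomp Require Import reals.
Set Implicit Arguments. Unset Strict Implicit. Unset Printing Implicit Defensive.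
Import Order.TTheory GRing.Theory Num.Theory.
Local Open Scope ring_scope.

(* A binary linear code of length N is represented by a square matrix C whose
   row space (mxalgebra) is the code; codewords are the v with (v <= C)%MS. *)

Definition hwt N (v : 'rV['F_2]_N) : nat := #|[set i : 'I_N | v 0 i != 0]|.

Definition is_binary_code N k D (C : 'M['F_2]_N) : Prop :=
  \rank C = k /\
  (exists2 v : 'rV['F_2]_N, (v <= C)%MS & (v != 0) && (hwt v == D)%N) /\
  (forall v : 'rV['F_2]_N, (v <= C)%MS -> v != 0 -> (D <= hwt v)%N).

Definition dotF2 N (u v : 'rV['F_2]_N) : 'F_2 := \sum_(i < N) u 0 i * v 0 i.

Definition in_dual N (C : 'M['F_2]_N) (u : 'rV['F_2]_N) : Prop :=
  forall v : 'rV['F_2]_N, (v <= C)%MS -> dotF2 u v = 0.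

Definition self_orthogonal N (C : 'M['F_2]_N) : Prop :=
  forall u : 'rV['F_2]_N, (u <= C)%MS -> in_dual C u.

Definition ceil_div (a b : nat) : nat := ((a + b - 1) %/ b)%N.

Definition griesmer_length (k D : nat) : nat := \sum_(i < k) ceil_div D (2 ^ i)%N.

(* Main.v *)
Require Import Defs.
From HB Require Import structures.
From mathcomp Require Import all_boot all_order all_algebra.
From mathcomp Require Import reals.
From mathcomp Require Import zify.
From mathcomp Require Import fingroup cyclic finalg vector falgebra fieldext finfield.
From mathcomp Require Import ring lra.
From Stdlib Require Import ClassicalEpsilon.
Import Order.TTheory GRing.Theory Num.Theory.
Set Implicit Arguments. Unset Strict Implicit. Unset Printing Implicit Defensive.

Local Open Scope nat_scope.
Lemma bits_sum k d : d < 2 ^ k -> \sum_(j < k | odd (d %/ 2 ^ j)) 2 ^ j = d.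
Proof.
elim: k d => [|k IH] d dlt.
  by rewrite big_ord0; move: dlt; rewrite expn0; case: d.
rewrite big_mkcond big_ord_recl /= expn0 divn1 -big_mkcond /=.
have h2 : d./2 < 2 ^ k.
  by rewrite -divn2 ltn_divLR // -expnSr.
under eq_bigl do rewrite /bump /= add1n expnS divnMA divn2.
under eq_bigr do rewrite /bump /= add1n expnS.
rewrite -big_distrr /= IH //.
by rewrite -[in RHS](odd_double_half d) -muln2 mulnC; case: (odd d).
Qed.

Lemma popc_sum k d : d < 2 ^ k ->
  \sum_(i < k) d %/ 2 ^ i + \sum_(j < k | odd (d %/ 2 ^ j)) 1 = d.*2.
Proof.
elim: k d => [|k IH] d dlt.
  by rewrite !big_ord0; move: dlt; rewrite expn0; case: d.
rewrite big_ord_recl [X in _ + X]big_mkcond big_ord_recl /= expn0 !divn1 -big_mkcond /=.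
have h2 : d./2 < 2 ^ k.
  by rewrite -divn2 ltn_divLR // -expnSr.
under [X in _ + (_ + X)]eq_bigl do rewrite /bump /= add1n expnS divnMA divn2.
under [X in _ + X + _]eq_bigr do rewrite /bump /= add1n expnS divnMA divn2.
have := IH _ h2.
have := odd_double_half d.
case: (odd d) => /=; lia.
Qed.

Lemma geo_sum k : (\sum_(i < k) 2 ^ (k.-1 - i)).+1 = 2 ^ k.
Proof.
elim: k => [|k IH]; first by rewrite big_ord0.
rewrite big_ord_recl /= subn0.
rewrite (eq_bigr (fun i : 'I_k => 2 ^ (k.-1 - i))); last first.
  by move=> i _; congr (_ ^ _); rewrite /bump /=; lia.
case: k IH => [|k] IH; first by rewrite big_ord0.
move: IH => /=; rewrite !expnS; lia.
Qed.

Lemma ceil_sub S P d : 0 < P -> d < S * P -> ceil_div (S * P - d) P + d %/ P = S.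
Proof.
move=> P0 dlt; rewrite /ceil_div.
have := divn_eq d P; have := ltn_pmod d P0.
set q := d %/ P; set r := d %% P => rlt Ed.
have qS : q < S.
  rewrite -(ltn_pmul2r P0); lia.
have -> : S * P - d + P - 1 = (S - q) * P + (P - 1 - r).
  rewrite mulnBl; nia.
rewrite divnMDl // divn_small; last lia.
lia.
Qed.

Lemma griesmer_id k s d : 0 < k -> d < s * 2 ^ k.-1 -> d < 2 ^ k ->
  griesmer_length k (s * 2 ^ k.-1 - d) + \sum_(j < k | odd (d %/ 2 ^ j)) 2 ^ j.+1
  = s * (2 ^ k).-1 + \sum_(j < k | odd (d %/ 2 ^ j)) 1.
Proof.
move=> k0 dlt dk.
have E1 : griesmer_length k (s * 2 ^ k.-1 - d) + \sum_(i < k) d %/ 2 ^ i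
          = s * (2 ^ k).-1.
  rewrite /griesmer_length -big_split /=.
  rewrite (eq_bigr (fun i : 'I_k => s * 2 ^ (k.-1 - i))); last first.
    move=> i _.
    have Ei : s * 2 ^ k.-1 = (s * 2 ^ (k.-1 - i)) * 2 ^ i.
      by rewrite -mulnA -expnD subnK // -ltnS prednK.
    by rewrite Ei ceil_sub ?expn_gt0 // -Ei.
  by rewrite -big_distrr /= -geo_sum.
have E2 : \sum_(j < k | odd (d %/ 2 ^ j)) 2 ^ j.+1 = d.*2.
  under eq_bigr do rewrite expnS.
  by rewrite -big_distrr /= bits_sum // mul2n.
rewrite E2 -(popc_sum dk); lia.
Qed.

Lemma cnt_le n (P : pred nat) : \sum_(i < n) P i <= n.
Proof.
apply: leq_trans (_ : \sum_(i < n) 1 <= n); last by rewrite sum1_card card_ord.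
by apply: leq_sum => i _; case: (P i).
Qed.

Lemma LB n (P : pred nat) :
  (\sum_(i < n) P i) * (\sum_(i < n) P i).+1 <= 2 * \sum_(i < n) P i * (n - i).
Proof.
elim: n P => [|n IH] P; first by rewrite !big_ord0.
rewrite big_ord_recl big_ord_recl /=.
have IH' := IH (fun i => P i.+1).
rewrite [X in _ <= 2 * (_ + X)](eq_bigr (fun i : 'I_n => P i.+1 * (n - i))); last first.
  by move=> i _; rewrite /bump /= add1n subSS.
rewrite (eq_bigr (fun i : 'I_n => P i.+1 : nat)); last by move=> i _; rewrite /bump /= add1n.
have := cnt_le n (fun i => P i.+1).
move: IH'; set a := \sum_(i < n) _; set b := \sum_(i < n) _.
case: (P 0) => /=; nia.
Qed.

Lemma sum_i3 n : 2 * \sum_(i < n) (i + 3) = n * (n + 5).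
Proof.
elim: n => [|n IH]; first by rewrite big_ord0.
rewrite big_ord_recr /= mulnDr IH; lia.
Qed.

Lemma W_val k : 4 <= k -> 2 * \sum_(j < k) (2 <= j <= k - 2) * (j + 1) = (k + 2) * (k - 3).
Proof.
case: k => [|[|[|[|m]]]] // _.
rewrite big_ord_recl big_ord_recl /=.
rewrite (eq_bigr (fun i : 'I_m.+2 => (i <= m) * (i + 3))); last first.
  move=> i _; rewrite /bump /=.
  have -> : (1 + (1 + i) <= m.+4 - 2) = (i <= m) by apply/idP/idP; lia.
  by rewrite (_ : 1 + (1 + i) + 1 = i + 3) //; lia.
rewrite big_ord_recr /= ltnn mul0n addn0.
rewrite (eq_bigr (fun i : 'I_m.+1 => i + 3)); last first.
  by move=> i _ /=; rewrite -ltnS ltn_ord mul1n.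
rewrite sum_i3; lia.
Qed.

Lemma belov k s (P : pred nat) :
  4 <= k -> (forall j, j < k -> P j -> 2 <= j <= k - 2) ->
  (k + 2) * (k - 3) <= 2 * k * s \/ 2 * k <= (s + 1) * (s + 2) ->
  s < \sum_(j < k) P j -> k <= \sum_(j < k) P j * (k.-1 - j).
Proof.
move=> k4 HP [HA|HB] Hs.
- have E : \sum_(j < k) P j * (k.-1 - j) + \sum_(j < k) P j * (j + 1)
           = (\sum_(j < k) P j) * k.
    rewrite -big_split big_distrl /=; apply: eq_bigr => j _.
    have := ltn_ord j; case: (P j) => /=; lia.
  have T : \sum_(j < k) P j * (j + 1) <= \sum_(j < k) (2 <= j <= k - 2) * (j + 1).
    apply: leq_sum => j _; have := HP j (ltn_ord j).
    by case: (P j) => //= /(_ isT) ->.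
  have W := W_val k4.
  have Hak : (s + 1) * k <= (\sum_(j < k) P j) * k by rewrite leq_mul2r addn1 Hs orbT.
  move: E T W Hak HA.
  set S := \sum_(j < k) P j * _; set T := \sum_(j < k) P j * _.
  set W := \sum_(j < k) _ * _; set a := \sum_(j < k) P j.
  nia.
- case: k k4 HP HB Hs => [|k] // k4 HP HB Hs.
  rewrite big_ord_recr /= in Hs *.
  have Pk : P k = false.
    by apply/negP => /(HP _ (ltnSn k)); lia.
  rewrite Pk /= addn0 in Hs *.
  rewrite big_ord_recr /= Pk /= addn0.
  have := LB k P.
  move: Hs; set a := \sum_(i < k) P i; set S := \sum_(i < k) _ * _ => Hs.
  have : (s + 1) * (s + 2) <= a * a.+1 by apply: leq_mul; lia.
  lia.
Qed.

Local Open Scope ring_scope.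
Lemma exists_irr (n : nat) : (0 < n)%N ->
  exists g : {poly 'F_2}, [/\ irreducible_poly g, g \is monic & size g = n.+1].
Proof.
move=> n0.
have [Fm chF cardF] := pPrimePowerField (isT : prime 2) n0.
pose L := pPrimeCharType chF.
have dimL : \dim {: L : vectType 'F_2} = n.
  by rewrite pprimeChar_dimf cardF pfactorK.
have cyc := field_unit_group_cyclic [set: {unit L}]%G.
case/cyclicP: cyc => u defU.
pose z : L := val u.
have full : (<<1; z>> = fullv)%VS.
  apply/eqP; rewrite eqEsubv subvf /=; apply/subvP => y _.
  have [->|y0] := eqVneq y 0; first exact: mem0v.
  have y0' : y \is a GRing.unit by rewrite unitfE.
  pose uy := FinRing.unit L y0'.
  have : uy \in <[u]>%g by rewrite -defU inE.
  case/cycleP => i Ei.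
  have -> : y = val uy by [].
  rewrite Ei.
  have -> : val (u ^+ i)%g = z ^+ i.
    elim: i {Ei} => [|i IH]; first by [].
    by rewrite expgSr /= IH exprSr.
  by apply: rpredX; apply: memv_adjoin.
have szm : size (minPoly 1 z) = n.+1.
  by rewrite size_minPoly adjoin_degreeE full dimv1 divn1 dimL.
have [q Dq] := polyOver1P (minPolyOver 1 z).
have szq : size q = n.+1 by rewrite -szm Dq size_map_poly.
have mq : q \is monic.
  have := monic_minPoly 1 z; rewrite Dq !monicE lead_coef_map.
  by move/eqP; rewrite -(rmorph1 (in_alg L)) => /fmorph_inj ->.
exists q; split => //.
split; first by rewrite szq.
move=> r szr rq.
have Hr : map_poly (in_alg L) r \is a polyOver 1%VS by apply/polyOver1P; exists r.
have Hd : map_poly (in_alg L) r %| minPoly 1 z by rewrite Dq dvdp_map.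
case/orP: (minPoly_irr Hr Hd).
- by rewrite Dq eqp_map.
- by rewrite -size_poly_eq1 size_map_poly (negPf szr).
Qed.

Lemma F2_cases (x : 'F_2) : x = 0 \/ x = 1.
Proof.
case: x => [[|[|i]] Hi]; [left|right|]; try by apply: val_inj.
by [].
Qed.

Lemma F2_neq0 (x : 'F_2) : (x != 0) = (x == 1).
Proof. by case: (F2_cases x) => ->. Qed.

Definition phi k (G : nat -> {poly 'F_2}) (j : nat) (h : 'rV['F_2]_(j.+1)) : 'rV['F_2]_k :=
  poly_rV (G j * rVpoly h).

Definition amult k (G : nat -> {poly 'F_2}) (J : pred nat) (v : 'rV['F_2]_k) : nat :=
  (\sum_(j < k) (J j && (G j %| rVpoly v)%R))%N.

Definition mult k s G J (v : 'rV['F_2]_k) : nat :=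
  if v == 0 then 0%N else (s - amult G J v)%N.

Definition cols k s G J : seq 'rV['F_2]_k :=
  flatten [seq nseq (mult s G J v) v | v <- enum 'rV['F_2]_k].

Lemma count_cols k s G J (P : pred 'rV['F_2]_k) :
  count P (cols k s G J) = (\sum_v mult s G J v * P v)%N.
Proof.
rewrite /cols count_flatten -map_comp sumnE big_map.
rewrite big_enum /=; apply: eq_bigr => v _ /=.
by rewrite count_nseq mulnC.
Qed.

Lemma size_rVpoly n (h : 'rV['F_2]_n) : (size (rVpoly h) <= n)%N.
Proof. by rewrite /rVpoly size_poly. Qed.

Lemma phiK k (G : nat -> {poly 'F_2}) j (h : 'rV['F_2]_(j.+1)) :
  (size (G j) <= k - j)%N -> (j < k)%N -> rVpoly (phi k G h) = G j * rVpoly h.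
Proof.
move=> sG jk; rewrite /phi poly_rV_K //.
apply: leq_trans (size_mul_leq _ _) _.
have H := size_rVpoly h.
have : (size (G j) + size (rVpoly h) <= k - j + j.+1)%N by apply: leq_add.
rewrite -subn1; move: sG; set a := size (G j); set b := size (rVpoly h); lia.
Qed.

Lemma phi_inj k (G : nat -> {poly 'F_2}) j : G j != 0 -> (size (G j) <= k - j)%N -> (j < k)%N ->
  injective (@phi k G j).
Proof.
move=> G0 sG jk h1 h2 E.
have : rVpoly (phi k G h1) = rVpoly (phi k G h2) by rewrite E.
rewrite !phiK // => /(mulfI G0) E2.
by rewrite -(rVpolyK h1) E2 rVpolyK.
Qed.

Lemma phi_surj k (G : nat -> {poly 'F_2}) j (v : 'rV['F_2]_k) : G j != 0 -> size (G j) = (k - j)%N -> (j < k)%N ->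
  G j %| rVpoly v -> exists h, v = phi k G (j := j) h.
Proof.
move=> G0 sG jk /dvdpP [q Eq].
have sq : (size q <= j.+1)%N.
  have [->|q0] := eqVneq q 0; first by rewrite size_poly0.
  have := size_rVpoly v; rewrite Eq size_mul // sG -subn1; set a := size q; lia.
exists (poly_rV q); rewrite /phi poly_rV_K // mulrC -Eq.
by rewrite rVpolyK.
Qed.

Lemma U_count k (G : nat -> {poly 'F_2}) j (P : pred 'rV['F_2]_k) : G j != 0 -> size (G j) = (k - j)%N -> (j < k)%N ->
  (\sum_v (G j %| rVpoly v)%R * P v)%N = #|[set h : 'rV['F_2]_(j.+1) | P (phi k G h)]|.
Proof.
move=> G0 sG jk.
have -> : (\sum_v (G j %| rVpoly v)%R * P v)%N = #|[set v | (G j %| rVpoly v) && P v]|.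
  rewrite -sum1_card [RHS]big_mkcond /=; apply: eq_bigr => v _.
  by rewrite inE; case: (G j %| _); case: (P v).
have -> : [set v | (G j %| rVpoly v) && P v] = @phi k G j @: [set h | P (phi k G h)].
  apply/setP => v; rewrite inE; apply/andP/imsetP.
  - case=> /(phi_surj G0 sG jk) [h ->] Pv; exists h => //; by rewrite inE.
  - case=> h; rewrite inE => Ph ->; split => //.
    rewrite phiK ?sG //; exact: dvdp_mulIl.
by rewrite card_imset //; apply: phi_inj => //; rewrite sG.
Qed.

Lemma F2_add_self (x : 'F_2) : x + x = 0.
Proof. by case: (F2_cases x) => ->; apply: val_inj. Qed.

Lemma half_count n (f : 'rV['F_2]_n -> 'F_2) (h0 : 'rV['F_2]_n) :
  (forall a b, f (a + b) = f a + f b) -> f h0 != 0 ->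
  (2 * #|[set h | f h != 0%R]| = 2 ^ n)%N.
Proof.
move=> fadd fh0.
have fh01 : f h0 = 1 by apply/eqP; rewrite -F2_neq0.
have E : [set h | f h == 0%R] = [set h + h0 | h in [set h | f h != 0%R]].
  apply/setP => h; rewrite inE; apply/idP/imsetP.
  - move=> /eqP fh; exists (h - h0); last by rewrite addrNK.
    rewrite inE.
    have : f h = f (h - h0) + f h0 by rewrite -fadd addrNK.
    rewrite fh fh01; case: (F2_cases (f (h - h0))) => -> //.
  - case=> h' ; rewrite inE => fh' ->; rewrite fadd fh01.
    move: fh'; rewrite F2_neq0 => /eqP ->; by apply/eqP/val_inj.
have C : #|[set h | f h == 0%R]| = #|[set h | f h != 0%R]|.
  by rewrite E card_imset //; apply: addIr.
have : (#|[set h | f h != 0%R]| + #|[set h | f h == 0%R]| = 2 ^ n)%N.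
  rewrite -cardsUI.
  have -> : [set h | f h != 0%R] :&: [set h | f h == 0%R] = set0.
    by apply/setP => h; rewrite !inE; case: (f h == 0).
  have -> : [set h | f h != 0%R] :|: [set h | f h == 0%R] = setT.
    by apply/setP => h; rewrite !inE; case: (f h == 0).
  by rewrite cards0 addn0 cardsT card_mx card_Fp // mul1n.
by rewrite C; lia.
Qed.

Lemma dot_add n (x a b : 'rV['F_2]_n) : dotF2 x (a + b) = dotF2 x a + dotF2 x b.
Proof. by rewrite /dotF2 -big_split /=; apply: eq_bigr => i _; rewrite mxE mulrDr. Qed.

Lemma dot0 n (x : 'rV['F_2]_n) : dotF2 x 0 = 0.
Proof. by rewrite /dotF2 big1 // => i _; rewrite mxE mulr0. Qed.

Lemma dot_delta n (x : 'rV['F_2]_n) i : dotF2 x (delta_mx 0 i) = x 0 i.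
Proof.
rewrite /dotF2 (bigD1 i) //= big1 ?addr0; first by rewrite mxE !eqxx mulr1.
by move=> j /negPf ji; rewrite mxE ji andbF mulr0.
Qed.

Lemma full_count n (x : 'rV['F_2]_n) : x != 0 ->
  (2 * #|[set v | dotF2 x v != 0%R]| = 2 ^ n)%N.
Proof.
move=> x0.
have [i xi] : exists i, x 0 i != 0.
  apply/existsP; apply: contraR x0 => /existsPn H; apply/eqP/rowP => i.
  by rewrite mxE; move: (H i); rewrite negbK => /eqP.
apply: (@half_count n (dotF2 x) (delta_mx 0 i)); first exact: dot_add.
by rewrite dot_delta.
Qed.

Definition weight k s G J (x : 'rV['F_2]_k) : nat :=
  count (fun c => dotF2 x c != 0) (cols k s G J).

Lemma weight_id k s (G : nat -> {poly 'F_2}) (J : pred nat) (x : 'rV['F_2]_k) :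
  (forall j, (j < k)%N -> J j -> G j != 0 /\ size (G j) = (k - j)%N) ->
  (forall v : 'rV['F_2]_k, v != 0 -> (amult G J v <= s)%N) ->
  (weight s G J x + \sum_(j < k) J j * #|[set h : 'rV['F_2]_(j.+1) | dotF2 x (phi k G h) != 0%R]|
   = s * #|[set v | dotF2 x v != 0%R]|)%N.
Proof.
move=> HG Hm.
have E1 : (\sum_(j < k) J j * #|[set h : 'rV['F_2]_(j.+1) | dotF2 x (phi k G h) != 0%R]|
          = \sum_v amult G J v * (dotF2 x v != 0%R))%N.
  rewrite /amult.
  under [RHS]eq_bigr do rewrite big_distrl /=.
  rewrite exchange_big /=; apply: eq_bigr => j _.
  case Jj: (J j) => /=; last by rewrite mul0n big1.
  have [G0 sG] := HG j (ltn_ord j) Jj.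
  by rewrite mul1n -(U_count (fun v => dotF2 x v != 0) G0 sG (ltn_ord j)).
rewrite /weight count_cols E1 -big_split /=.
rewrite -sum1_card big_distrr [RHS]big_mkcond /=; apply: eq_bigr => v _.
rewrite inE /mult.
have [->|v0] := eqVneq v 0; first by rewrite dot0 eqxx !muln0.
have := Hm v v0; case: (dotF2 x v != 0); rewrite ?muln0 ?muln1 //=; lia.
Qed.

Lemma size_cols_id k s (G : nat -> {poly 'F_2}) (J : pred nat) :
  (forall j, (j < k)%N -> J j -> G j != 0 /\ size (G j) = (k - j)%N) ->
  (forall v : 'rV['F_2]_k, v != 0 -> (amult G J v <= s)%N) ->
  (size (cols k s G J) + \sum_(j < k) J j * 2 ^ j.+1
   = s * (2 ^ k).-1 + \sum_(j < k) J j)%N.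
Proof.
move=> HG Hm.
have E1 : (\sum_(j < k) J j * 2 ^ j.+1 = \sum_(v : 'rV['F_2]_k) amult G J v)%N.
  rewrite /amult; symmetry; rewrite exchange_big /=; symmetry; apply: eq_bigr => j _.
  case Jj: (J j) => /=; last by rewrite mul0n big1.
  have [G0 sG] := HG j (ltn_ord j) Jj.
  have := U_count (fun _ => true) G0 sG (ltn_ord j).
  under eq_bigr do rewrite muln1.
  move=> ->; rewrite mul1n.
  have -> : [set h : 'rV['F_2]_(j.+1) | true] = setT by apply/setP => h; rewrite !inE.
  by rewrite cardsT card_mx card_Fp // mul1n.
have -> : size (cols k s G J) = (\sum_(v : 'rV['F_2]_k) mult s G J v)%N.
  by rewrite -(count_predT (cols k s G J)) count_cols; apply: eq_bigr => v _; rewrite muln1.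
rewrite E1 -big_split /= (bigD1 0) //= /mult eqxx add0n.
have -> : amult G J (0 : 'rV['F_2]_k) = (\sum_(j < k) J j)%N.
  by rewrite /amult; apply: eq_bigr => j _; rewrite linear0 dvdp0 andbT.
rewrite addnC; congr (_ + _)%N.
rewrite (eq_bigr (fun _ => s)); last first.
  by move=> v /negPf v0; rewrite v0; have := Hm v (negbT v0); lia.
rewrite sum_nat_const mulnC; congr (_ * _)%N.
by rewrite cardC1 card_mx card_Fp // mul1n.
Qed.

Lemma prod_dvd (I : eqType) (F : I -> {poly 'F_2}) (r : seq I) p :
  uniq r -> (forall i, i \in r -> F i %| p) ->
  (forall i j, i \in r -> j \in r -> i != j -> coprimep (F i) (F j)) ->
  \prod_(i <- r) F i %| p.
Proof.
elim: r => [|a r IH] /=; first by rewrite big_nil dvd1p.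
case/andP => ar ur Hd Hc; rewrite big_cons.
have cop : coprimep (F a) (\prod_(i <- r) F i).
  rewrite big_seq; apply: (big_ind (fun q => coprimep (F a) q)).
  - exact: coprimep1.
  - by move=> x y cx cy; rewrite coprimepMr cx cy.
  - move=> i ir; apply: Hc; [by rewrite inE eqxx | by rewrite inE ir orbT |].
    by apply/eqP => ai; move: ar; rewrite ai ir.
rewrite Gauss_dvdp // Hd ?inE ?eqxx //=.
apply: IH => // [i ir|i j ir jr]; first by apply: Hd; rewrite inE ir orbT.
by apply: Hc; rewrite inE ?ir ?jr orbT.
Qed.

Lemma irr_coprime (g h : {poly 'F_2}) :
  irreducible_poly g -> irreducible_poly h -> size g != size h -> coprimep g h.
Proof.
move=> [sg Ig] [sh Ih] neq.
rewrite coprimep_def; apply/negPn/negP => H.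
have Eg := Ig _ H (dvdp_gcdl g h).
have gh : g %| h by rewrite -(eqp_dvdl _ Eg) dvdp_gcdr.
have Eh := Ih _ (negbT (gtn_eqF sg)) gh.
by move: neq; rewrite (eqp_size Eh) eqxx.
Qed.

Lemma mult_bound k s (G : nat -> {poly 'F_2}) (J : pred nat) :
  (4 <= k)%N ->
  (forall j, (j < k)%N -> J j -> (2 <= j <= k - 2)%N) ->
  (forall j, (j < k)%N -> J j -> irreducible_poly (G j) /\ size (G j) = (k - j)%N) ->
  ((k + 2) * (k - 3) <= 2 * k * s \/ 2 * k <= (s + 1) * (s + 2))%N ->
  forall v : 'rV['F_2]_k, v != 0 -> (amult G J v <= s)%N.
Proof.
move=> k4 HJ HG Hc v v0.
rewrite leqNgt; apply/negP => Hs.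
pose P := fun j : nat => J j && (G j %| rVpoly v).
have HP : forall j, (j < k)%N -> P j -> (2 <= j <= k - 2)%N.
  by move=> j jk /andP [Jj _]; apply: HJ.
have B := belov k4 HP Hc Hs.
have pv0 : rVpoly v != 0.
  apply: contra v0 => /eqP H; apply/eqP; by rewrite -(rVpolyK v) H linear0.
have Hd : \prod_(j < k | P j) G j %| rVpoly v.
  rewrite -big_filter; apply: prod_dvd.
  - by rewrite filter_uniq // index_enum_uniq.
  - by move=> i; rewrite mem_filter => /andP [/andP [_ H] _].
  - move=> i j; rewrite !mem_filter => /andP[/andP[Ji _] _] /andP[/andP[Jj _] _] ij.
    have [Ii si] := HG i (ltn_ord i) Ji; have [Ij sj] := HG j (ltn_ord j) Jj.
    apply: irr_coprime => //; rewrite si sj.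
    apply: contra ij => /eqP E; apply/eqP/val_inj => /=.
    have := ltn_ord i; have := ltn_ord j; lia.
have Hsz := dvdp_leq pv0 Hd.
rewrite size_prod in Hsz; last first.
  move=> j /andP [Jj _]; have [[Ij _] _] := HG j (ltn_ord j) Jj.
  by rewrite -size_poly_gt0; lia.
have E1 : (\sum_(j < k | P j) size (G j) = \sum_(j < k) P j * (k - j))%N.
  rewrite big_mkcond /=; apply: eq_bigr => j _.
  case Pj: (P j) => //=; rewrite mul1n.
  by case/andP: Pj => Jj _; have [_ ->] := HG j (ltn_ord j) Jj.
have E2 : #|(fun i : 'I_k => P i)| = (\sum_(j < k) P j)%N.
  rewrite -sum1_card big_mkcond /=; apply: eq_bigr => j _.
  by rewrite unfold_in /=; case: (P j).
have E3 : (\sum_(j < k) P j * (k.-1 - j) + \sum_(j < k) P j = \sum_(j < k) P j * (k - j))%N.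
  rewrite -big_split /=; apply: eq_bigr => j _.
  have := ltn_ord j; case: (P j) => /=; lia.
have Hv : (size (rVpoly v) <= k)%N by apply: size_rVpoly.
move: Hsz B; rewrite E1 E2 -E3.
set X := (\sum_(j < k) P j * (k.-1 - j))%N; set Y := (\sum_(j < k) P j)%N.
move: Hv; set z := size (rVpoly v); lia.
Qed.

Lemma hwt_sum N (w : 'rV['F_2]_N) : hwt w = (\sum_(i < N) (w 0%R i != 0%R))%N.
Proof.
rewrite /hwt -sum1_card big_mkcond /=; apply: eq_bigr => i _.
by rewrite inE; case: (w 0%R i != 0%R).
Qed.

Lemma dot_sum N (u v : 'rV['F_2]_N) :
  dotF2 u v = ((\sum_(i < N) ((u 0%R i != 0%R) && (v 0%R i != 0%R)))%N)%:R.
Proof.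
rewrite /dotF2 natr_sum; apply: eq_bigr => i _.
by case: (F2_cases (u 0 i)) => ->; case: (F2_cases (v 0 i)) => ->; apply: val_inj.
Qed.

Lemma so_weights N (u v : 'rV['F_2]_N) :
  (4 %| hwt u)%N -> (4 %| hwt v)%N -> (4 %| hwt (u + v))%N -> dotF2 u v = 0.
Proof.
move=> Hu Hv Huv.
have E : (hwt (u + v) + 2 * \sum_(i < N) ((u 0%R i != 0%R) && (v 0%R i != 0%R)) = hwt u + hwt v)%N.
  rewrite !hwt_sum big_distrr -!big_split /=; apply: eq_bigr => i _.
  rewrite mxE.
  by case: (F2_cases (u 0 i)) => ->; case: (F2_cases (v 0 i)) => ->.
rewrite dot_sum -(Fp_nat_mod (isT : prime 2)).
move: E Hu Hv Huv; set T := (\sum_(i < N) _)%N.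
move=> E Hu Hv Huv.
have -> : (T %% 2 = 0)%N.
  move: Hu Hv Huv; rewrite /dvdn => /eqP Hu /eqP Hv /eqP Huv.
  lia.
by [].
Qed.

Lemma code_exists N k (cs : seq 'rV['F_2]_k) D :
  size cs = N -> (k <= N)%N -> (0 < D)%N ->
  (forall x : 'rV['F_2]_k, x != 0 ->
     (D <= count (fun c => dotF2 x c != 0%R) cs)%N /\ (4 %| count (fun c => dotF2 x c != 0%R) cs)%N) ->
  (exists2 x : 'rV['F_2]_k, x != 0 & count (fun c => dotF2 x c != 0%R) cs = D) ->
  exists C : 'M['F_2]_N, is_binary_code k D C /\ self_orthogonal C.
Proof.
move=> szN kN D0 Hw [xs xs0 Hxs].
pose Gm : 'M['F_2]_(k, N) := \matrix_(i, j) (nth 0 cs j) 0 i.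
pose wt x := count (fun c => dotF2 x c != 0) cs.
have Hh : forall x, hwt (x *m Gm) = wt x.
  move=> x; rewrite hwt_sum /wt -sum1_count (big_nth 0) big_mkord szN.
  rewrite [RHS]big_mkcond /=; apply: eq_bigr => j _.
  have -> : (x *m Gm) 0 j = dotF2 x cs`_j.
    by rewrite !mxE /dotF2; apply: eq_bigr => i _; rewrite /Gm mxE.
  by case: (dotF2 x cs`_j != 0).
have H0 : hwt (0 : 'rV['F_2]_N) = 0%N.
  by rewrite hwt_sum big1 // => i _; rewrite mxE eqxx.
have H4 : forall x, (4 %| hwt (x *m Gm))%N.
  move=> x; have [->|x0] := eqVneq x 0; first by rewrite mul0mx H0.
  by rewrite Hh; case: (Hw x x0).
have HD : forall x, x != 0 -> (D <= hwt (x *m Gm))%N.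
  by move=> x x0; rewrite Hh; case: (Hw x x0).
have rf : row_free Gm.
  apply: inj_row_free => x Hx; apply/eqP; apply: contraT => x0.
  by have := HD x x0; rewrite Hx H0; move: D0; case: (D).
have Hfull : row_full (pid_mx k : 'M['F_2]_(N, k)).
  by rewrite /row_full rank_pid_mx.
pose C := (pid_mx k : 'M['F_2]_(N, k)) *m Gm.
have EC := eqmxMfull Gm Hfull.
have subC : forall v : 'rV['F_2]_N, (v <= C)%MS -> exists x, v = x *m Gm.
  by move=> v; rewrite /C EC => /submxP.
exists C; split.
- split; first by rewrite /C EC; apply/eqP.
  split.
  + exists (xs *m Gm); first by rewrite /C EC submxMl.
    apply/andP; split; last by rewrite Hh /wt Hxs.
    by apply: contraTneq D0 => E; rewrite -Hxs -/(wt xs) -Hh E H0.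
  + move=> v /subC [x ->] v0; apply: HD.
    by apply: contraNneq v0 => ->; rewrite mul0mx.
- move=> u /subC [x ->] w /subC [y ->].
  apply: so_weights; rewrite ?H4 //.
  by rewrite -mulmxDl H4.
Qed.

Lemma phi_add k (G : nat -> {poly 'F_2}) j (a b : 'rV['F_2]_(j.+1)) :
  phi k G (a + b) = phi k G a + phi k G b.
Proof. by rewrite /phi [rVpoly _]raddfD mulrDr raddfD. Qed.

Lemma dot_deltal n (w : 'rV['F_2]_n) i : dotF2 (delta_mx 0 i) w = w 0 i.
Proof.
rewrite /dotF2 (bigD1 i) //= big1 ?addr0; first by rewrite mxE !eqxx mul1r.
by move=> j /negPf ji; rewrite mxE ji andbF mul0r.
Qed.

Lemma cj_val k (G : nat -> {poly 'F_2}) j (x : 'rV['F_2]_k) :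
  #|[set h : 'rV['F_2]_(j.+1) | dotF2 x (phi k G h) != 0%R]| =
  (if [exists h : 'rV['F_2]_(j.+1), dotF2 x (phi k G h) != 0%R] then 2 ^ j else 0)%N.
Proof.
case: existsP => [[h0 Hh0]|Hn].
  have := @half_count j.+1 (fun h => dotF2 x (phi k G h)) h0.
  move=> /(_ _ Hh0) H; have {}H := H (fun a b => etrans (congr1 _ (phi_add _ _ _ _)) (dot_add _ _ _)).
  by move: H; rewrite expnS => /eqP; rewrite eqn_mul2l /= => /eqP.
apply/eqP; rewrite cards_eq0; apply/eqP/setP => h; rewrite !inE.
by apply/negbTE/negP => H; apply: Hn; exists h.
Qed.

Lemma weight_analysis k s (G : nat -> {poly 'F_2}) (J : pred nat) d (x : 'rV['F_2]_k) :
  (0 < k)%N ->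
  (forall j, (j < k)%N -> J j -> G j != 0 /\ size (G j) = (k - j)%N) ->
  (forall v : 'rV['F_2]_k, v != 0 -> (amult G J v <= s)%N) ->
  (forall j, (j < k)%N -> J j -> (2 <= j)%N) ->
  (4 %| s * 2 ^ k.-1)%N ->
  (\sum_(j < k) J j * 2 ^ j)%N = d ->
  x != 0 ->
  [/\ (s * 2 ^ k.-1 - d <= weight s G J x)%N, (4 %| weight s G J x)%N &
   ((forall j, (j < k)%N -> J j -> exists h : 'rV['F_2]_(j.+1), dotF2 x (phi k G h) != 0%R) ->
    weight s G J x = (s * 2 ^ k.-1 - d)%N)].
Proof.
move=> k0 HG Hm H2 H4 Hd x0.
have W := weight_id x HG Hm.
have Fc := full_count x0.
have E : (s * #|[set v | dotF2 x v != 0%R]| = s * 2 ^ k.-1)%N.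
  congr (_ * _)%N; have e2 : (2 ^ k = 2 * 2 ^ k.-1)%N by rewrite -expnS prednK.
  lia.
rewrite E in W.
set S := (\sum_(j < k) _)%N in W.
have SL : (S <= d)%N.
  rewrite -Hd; apply: leq_sum => j _; rewrite cj_val.
  by case: (J j); case: [exists _, _]; rewrite ?mul0n ?mul1n.
have S4 : (4 %| S)%N.
  apply: dvdn_sum => j _; rewrite cj_val.
  case Jj: (J j); rewrite ?mul0n ?dvdn0 // mul1n.
  case: [exists _, _]; rewrite ?dvdn0 //.
  have := H2 j (ltn_ord j) Jj => j2.
  by rewrite (_ : 4 = 2 ^ 2)%N // dvdn_exp2l.
split.
- lia.
- have -> : weight s G J x = (s * 2 ^ k.-1 - S)%N by lia.
  by apply: dvdn_sub.
- move=> Hall.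
  have SD : S = d.
    rewrite -Hd; apply: eq_bigr => j _; rewrite cj_val.
    case Jj: (J j); rewrite ?mul0n // !mul1n.
    case: existsP => // Hn; exfalso.
    have [h Hh] := Hall j (ltn_ord j) Jj; apply: Hn; by exists h.
  lia.
Qed.

Lemma special_x k (G : nat -> {poly 'F_2}) j (i : 'I_k) :
  (i : nat) = k.-1 -> (j < k)%N -> G j \is monic -> size (G j) = (k - j)%N ->
  exists h : 'rV['F_2]_(j.+1), dotF2 (delta_mx 0 i) (phi k G h) != 0%R.
Proof.
move=> Ei jk mG sG.
exists (poly_rV 'X^j).
rewrite dot_deltal /phi poly_rV_K ?size_polyXn // mxE coefMXn.
have -> : (i < j)%N = false by apply/negbTE; rewrite -leqNgt Ei; lia.
have -> : (i - j)%N = (size (G j)).-1 by rewrite sG Ei; lia.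
by rewrite -lead_coefE (monicP mG) oner_eq0.
Qed.

Local Open Scope ring_scope.
Lemma real_cond (R : realType) (k : nat) (m : int) (s : nat) :
  (4 <= k)%N ->
  (m >= Num.min
          (Num.ceil (((k%:R + 2) * (k%:R - 3)) / (2 * k%:R) : R))
          (Num.ceil (Num.sqrt (2 * k%:R + 1 / 4) - 3 / 2 : R)) - 1)%R ->
  (m < s%:Z)%R ->
  ((k + 2) * (k - 3) <= 2 * k * s \/ 2 * k <= (s + 1) * (s + 2))%N.
Proof.
move=> k4 Hm Hs.
have H1 : (Num.min (Num.ceil (((k%:R + 2) * (k%:R - 3)) / (2 * k%:R) : R))
          (Num.ceil (Num.sqrt (2 * k%:R + 1 / 4) - 3 / 2 : R)) <= s%:Z)%R.
  rewrite -(lerD2r (-1)); apply: le_trans Hm _.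
  by rewrite -ltzD1 addrNK.
have k0 : (0 : R) < k%:R by rewrite ltr0n; lia.
move: H1; rewrite ge_min => /orP [] /=; rewrite ceil_le_int => H.
- left.
  have : ((k%:R + 2) * (k%:R - 3) : R) <= 2 * k%:R * s%:R.
    move: H; rewrite ler_pdivrMr ?mulr_gt0 // => H'; rewrite [X in _ <= X]mulrC; exact: H'.
  have k3 : (3 <= k)%N by lia.
  by rewrite -(natrB _ k3) -natrD -!natrM ler_nat.
- right.
  set x : R := 2 * k%:R + 1 / 4.
  have x0 : 0 <= x by rewrite /x; apply: addr_ge0; [apply: mulr_ge0|]; rewrite ?ler0n ?divr_ge0 ?ler01 ?ler0n.
  have sq0 := sqrtr_ge0 x.
  have sq2 : Num.sqrt x ^+ 2 = x by rewrite sqr_sqrtr.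
  have Hs' : Num.sqrt x <= s%:R + 3 / 2.
    by move: H; rewrite lerBlDr.
  have s0 : (0 : R) <= s%:R by rewrite ler0n.
  have : (2 * k%:R : R) <= s%:R ^+ 2 + 3 * s%:R + 2.
    move: sq2 Hs' sq0 s0; rewrite /x; set a := Num.sqrt _; set b : R := s%:R.
    move=> sq2 Hs' sq0 s0; nra.
  have -> : (s%:R ^+ 2 + 3 * s%:R + 2 : R) = ((s + 1) * (s + 2))%:R.
    by rewrite natrM !natrD; ring.
  by rewrite -natrM ler_nat.
Qed.


Unset Implicit Arguments.
Set Strict Implicit.

Theorem theorem4p8 (R : realType) (k : nat) (m : int) (D : nat) :
  (4 <= k)%N ->
  (m >= Num.min
          (Num.ceil (((k%:R + 2) * (k%:R - 3)) / (2 * k%:R) : R))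
          (Num.ceil (Num.sqrt (2 * k%:R + 1 / 4) - 3 / 2 : R)) - 1)%R ->
  (0 < D)%N -> (4 %| D)%N ->
  (m * (2 ^ k.-1)%:Z <= D%:Z)%R ->
  exists C : 'M['F_2]_(griesmer_length k D),
    is_binary_code k D C /\ self_orthogonal C.
Proof.
move=> k4 Hm D0 D4 HmD.
have k0 : (0 < k)%N by lia.
pose P := (2 ^ k.-1)%N.
have P0 : (0 < P)%N by rewrite expn_gt0.
have P4 : (4 %| P)%N by rewrite /P (_ : 4 = 2 ^ 2)%N // dvdn_exp2l; lia.
pose s := ceil_div D P.
have [sP1 sP2] : (D <= s * P /\ s * P < D + P)%N.
  rewrite /s /ceil_div; have := divn_eq (D + P - 1) P; have := ltn_pmod (D + P - 1) P0.
  set q := ((D + P - 1) %/ P)%N; set r := ((D + P - 1) %% P)%N; nia.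
pose d := (s * P - D)%N.
have dP : (d < P)%N by rewrite /d; lia.
have dsP : (d < s * P)%N by rewrite /d; lia.
have Deq : D = (s * P - d)%N by rewrite /d; lia.
have d4 : (4 %| d)%N by apply: dvdn_sub => //; apply: dvdn_mull.
have dk : (d < 2 ^ k)%N.
  apply: leq_trans dP _; rewrite /P leq_exp2l //; lia.
pose J := fun j : nat => odd (d %/ 2 ^ j).
have HJ : forall j, (j < k)%N -> J j -> (2 <= j <= k - 2)%N.
  move=> j jk; rewrite /J.
  case/dvdnP: d4 => t dt.
  case: j jk => [|[|j]] jk.
  - by rewrite expn0 divn1 dt oddM andbF.
  - by rewrite expn1 dt (_ : t * 4 = (t * 2) * 2)%N ?mulnK // ?oddM ?andbF //; lia.
  - move=> od.
    have : (j.+2 != k.-1).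
      by apply/eqP => E; move: od; rewrite E divn_small.
    lia.
have H2 : forall j, (j < k)%N -> J j -> (2 <= j)%N.
  by move=> j jk Jj; have /andP [] := HJ j jk Jj.
have Hd : (\sum_(j < k) J j * 2 ^ j)%N = d.
  have := bits_sum dk; rewrite big_mkcond /= => <-.
  by apply: eq_bigr => j _; rewrite /J; case: (odd _); rewrite ?mul1n.
have Hirr : forall c, exists g : {poly 'F_2},
    (0 < c)%N -> [/\ irreducible_poly g, g \is monic & size g = c.+1].
  move=> c; case: (posnP c) => [->|c0]; first by exists 0.
  by have [g Hg] := exists_irr c0; exists g.
pose G := fun j : nat => proj1_sig (constructive_indefinite_description _ (Hirr (k.-1 - j)%N)).
have HG : forall j, (j < k)%N -> J j ->
    [/\ irreducible_poly (G j), G j \is monic & size (G j) = (k - j)%N].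
  move=> j jk Jj; have /andP [j2 jk2] := HJ j jk Jj.
  have c0 : (0 < k.-1 - j)%N by lia.
  have [I1 M1 S1] := proj2_sig (constructive_indefinite_description _ (Hirr (k.-1 - j)%N)) c0.
  by split => //; rewrite S1; lia.
have HG1 : forall j, (j < k)%N -> J j -> irreducible_poly (G j) /\ size (G j) = (k - j)%N.
  by move=> j jk Jj; have [] := HG j jk Jj.
have HG2 : forall j, (j < k)%N -> J j -> G j != 0 /\ size (G j) = (k - j)%N.
  move=> j jk Jj; have [[I1 _] _ S1] := HG j jk Jj; split => //.
  by rewrite -size_poly_gt0; lia.
have Hmult : forall v : 'rV['F_2]_k, v != 0 -> (amult G J v <= s)%N.
  case: (posnP d) => [d0|dpos].
  - move=> v _; rewrite /amult big1 // => j _.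
    by rewrite /J d0 div0n.
  - apply: mult_bound => //.
    apply: (real_cond (R:=R) k4 Hm).
    have : (m * P%:Z < s%:Z * P%:Z)%R.
      apply: le_lt_trans HmD _; rewrite -PoszM ltz_nat; lia.
    by rewrite ltr_pM2r // ltz_nat.
have szcs : size (cols k s G J) = griesmer_length k D.
  have A := size_cols_id HG2 Hmult.
  have B := griesmer_id k0 dsP dk.
  rewrite -Deq in B.
  have E1 : (\sum_(j < k | odd (d %/ 2 ^ j)) 2 ^ j.+1 = \sum_(j < k) J j * 2 ^ j.+1)%N.
    by rewrite big_mkcond /=; apply: eq_bigr => j _; rewrite /J; case: (odd _); rewrite ?mul1n.
  have E2 : (\sum_(j < k | odd (d %/ 2 ^ j)) 1 = \sum_(j < k) J j)%N.
    by rewrite big_mkcond /=; apply: eq_bigr => j _; rewrite /J; case: (odd _).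
  rewrite E1 E2 in B; lia.
have kN : (k <= griesmer_length k D)%N.
  rewrite /griesmer_length; apply: leq_trans (_ : \sum_(i < k) 1 <= _)%N.
    by rewrite sum1_card card_ord.
  apply: leq_sum => i _; rewrite /ceil_div divn_gt0 ?expn_gt0 //.
  have := expn_gt0 2 i; lia.
apply: (code_exists szcs kN D0).
- move=> x x0.
  have [W1 W2 _] := weight_analysis k0 HG2 Hmult H2 (dvdn_mull s P4) Hd x0.
  by split => //; rewrite Deq.
- have ik : (k.-1 < k)%N by lia.
  pose i := Ordinal ik.
  have xs0 : delta_mx 0 i != 0 :> 'rV['F_2]_k.
    apply/eqP => H; have := congr1 (fun M : 'rV['F_2]_k => M 0 i) H.
    by rewrite !mxE !eqxx /=; move/eqP; rewrite oner_eq0.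
  exists (delta_mx 0 i) => //.
  have [_ _ W3] := weight_analysis k0 HG2 Hmult H2 (dvdn_mull s P4) Hd xs0.
  rewrite /weight in W3; rewrite W3 -?Deq //.
  move=> j jk Jj; have [_ mG sG] := HG j jk Jj.
  exact: special_x.
Qed.
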